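(* In any execution of Algorithm $\gamma$n-Burst, within any time interval $I^+$ during which at all times at least $n^2$ tasks of cost $\ell_{\max}$ are pending in $\gamma$n-Burst, each $\ell_{\max}$-task has at most one absolute task execution fully contained in $I^+$ (all such absolute task executions appear exactly once).
   Context: Model: $n$ processors with ids $1,\dots,n$ and a shared repository; tasks with ids, arrival times and costs $\ell_{\min}$ or $\ell_{\max}$ ($0<\ell_{\min}<\ell_{\max}$) are injected over time; processors may crash and restart (restarted processors remember only the algorithm and $n$). A task is pending if injected and its completion not yet reported; once reported it is immediately removed. A processor repeatedly obtains the pending set, chooses a task, executes it (a task of cost $\ell$ takes time $\ell/s$ with speedup $s>1$) and reports it; execution is non-preemptive and a crash loses progress. An absolute task execution of $\tau$ is an interval $[t,t']$ in which a processor schedules $\tau$ at $t$ and reports it at $t'$ without stopping in $[t,t')$. Algorithm $\gamma$n-Burst for processor $p$, with $\gamma=\lceil\frac{\ell_{\max}-s\ell_{\min}}{(s-1)\ell_{\min}}\rceil$: counter $c$ set to $0$ on (re)start; each cycle it forms lists $L_{\min},L_{\max}$ of pending tasks of cost $\ell_{\min},\ell_{\max}$ sorted by arrival. Case 1 (both lists $<n^2$): if previous task had cost $\ell_{\min}$, perform task at position $(pn)\bmod|L_{\max}|$ of $L_{\max}$, $c\gets0$; else task at position $(pn)\bmod|L_{\min}|$ of $L_{\min}$, $c\gets\min(c+1,\gamma)$. Case 2 ($|L_{\min}|\ge n^2>|L_{\max}|$): position $pn$ of $L_{\min}$, $c\gets\min(c+1,\gamma)$. Case 3 ($|L_{\max}|\ge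 n^2>|L_{\min}|$): position $pn$ of $L_{\max}$, $c\gets0$. Case 4 (both $\ge n^2$): if $c=\gamma$, position $pn$ of $L_{\max}$, $c\gets0$; else position $pn$ of $L_{\min}$, $c\gets\min(c+1,\gamma)$. Then report the task. *)

(* Defs.v *)
From mathcomp Require Import all_boot all_order all_algebra.
From mathcomp Require Import reals.
Set Implicit Arguments. Unset Strict Implicit. Unset Printing Implicit Defensive.
Import Order.TTheory GRing.Theory Num.Theory.
Local Open Scope ring_scope.

Inductive kind := Crash | Restart | Sched of nat | Report of nat.

(* An execution with n processors (processor p : 'I_n has id (val p).+1).
   [ev p k] is the k-th event (time, kind) of processor p, None once the
   (finite) trace has ended.  Tasks: [injected x], arrival time [arr x],
   cost ell_max iff [big x] (ell_min otherwise). *)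
Record execution (R : realType) (n : nat) := Execution {
  injected : nat -> Prop;
  arr : nat -> R;
  big : nat -> bool;
  ev : 'I_n -> nat -> option (R * kind)
}.

Section Model.
Variables (R : realType) (n : nat) (lmin lmax s : R) (E : execution R n).

Definition cost (x : nat) : R := if big E x then lmax else lmin.

Definition pending (t : R) (x : nat) : Prop :=
  injected E x /\ arr E x <= t /\
  ~ (exists (p : 'I_n) (k : nat) (t' : R), ev E p k = Some (t', Report x) /\ t' <= t).

Definition no_pending (t : R) : Prop := forall x, ~ pending t x.

Definition card_is (P : nat -> Prop) (k : nat) : Prop :=
  exists l : seq nat, uniq l /\ size l = k /\ forall x, x \in l <-> P x.

Definition at_least (P : nat -> Prop) (k : nat) : Prop :=
  exists l : seq nat, uniq l /\ (k <= size l)%N /\ forall x, x \in l -> P x.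

(* order of the lists L_min, L_max: by arrival time, ties broken by id *)
Definition prec (y x : nat) : Prop :=
  arr E y < arr E x \/ (arr E y = arr E x /\ (y < x)%N).

(* L_b(t): pending tasks of cost ell_max (b = true) / ell_min (b = false) *)
Definition inL (t : R) (b : bool) (y : nat) : Prop := pending t y /\ big E y = b.

(* x is at (0-based) position k of the sorted list L_b(t) *)
Definition at_pos (t : R) (b : bool) (x : nat) (k : nat) : Prop :=
  inL t b x /\ card_is (fun y => inL t b y /\ prec y x) k.

Definition gamma : int := Num.ceil ((lmax - s * lmin) / ((s - 1) * lmin)).

(* Processor p with counter c and memory prev (cost of the previous task
   since the last (re)start, None if none) choosing task x at time t. *)
Definition chooses (p : 'I_n) (c : int) (prev : option bool) (t : R) (x : nat) : Prop :=
  exists m1 m2 : nat,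
    card_is (inL t false) m1 /\ card_is (inL t true) m2 /\
    let P := ((val p).+1 * n)%N in
    let pick b m := at_pos t b x (P %% m)%N in
    let N2 := (n ^ 2)%N in
    if (m1 < N2)%N && (m2 < N2)%N then
      (* Case 1 (if the designated list is empty, the other one is used) *)
      if prev == Some false then
        (if (0 < m2)%N then pick true m2 else pick false m1)
      else (if (0 < m1)%N then pick false m1 else pick true m2)
    else if (m2 < N2)%N then pick false m1
    else if (m1 < N2)%N then pick true m2
    else if c == gamma then pick true m2 else pick false m1.

Definition new_counter (c : int) (x : nat) : int :=
  if big E x then 0 else Order.min (c + 1) gamma.

(* local state of a processor: Down since time t; Idle with counter and
   previous-task memory, idle since time t; Busy with counter, task, start. *)
Inductive pstate :=
  | Down of R
  | Idle of int & option bool & R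
  | Busy of int & nat & R.

Definition step (p : 'I_n) (st : pstate) (e : R * kind) (st' : pstate) : Prop :=
  let: (t, k) := e in
  match st, k with
  | Idle c pr t0, Crash =>
      st' = Down t /\ t0 <= t /\ (forall u, t0 <= u < t -> no_pending u)
  | Busy c x t0, Crash =>
      st' = Down t /\ t0 <= t /\ t < t0 + cost x / s
  | Down t0, Restart =>
      st' = Idle 0 None t /\ t0 <= t
  | Idle c pr t0, Sched x =>
      st' = Busy (new_counter c x) x t /\ t0 <= t /\
      (forall u, t0 <= u < t -> no_pending u) /\ chooses p c pr t x
  | Busy c x t0, Report y =>
      st' = Idle c (Some (big E x)) t /\ y = x /\ t = t0 + cost x / s
  | _, _ => False
  end.

(* final states of a finite trace: crashed forever, or idle forever with
   nothing pending *)
Definition final_ok (st : pstate) : Prop :=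
  match st with
  | Down _ => True
  | Idle _ _ t0 => forall u, t0 <= u -> no_pending u
  | Busy _ _ _ => False
  end.

Definition valid : Prop :=
  (forall t, exists l : seq nat, forall x, injected E x -> arr E x <= t -> x \in l) /\
  (forall p : 'I_n, exists st : nat -> pstate,
     st 0%N = Idle 0 None 0 /\
     forall k : nat, match ev E p k with
                     | Some e => step p (st k) e (st k.+1)
                     | None => ev E p k.+1 = None /\ final_ok (st k)
                     end).

Definition abs_exec (p : 'I_n) (x : nat) (t t' : R) : Prop :=
  exists k : nat, ev E p k = Some (t, Sched x) /\ ev E p k.+1 = Some (t', Report x).

End Model.

Definition is_interval (R : realType) (I : R -> Prop) : Prop :=
  forall x y z, I x -> I z -> x <= y -> y <= z -> I y.

Definition contained (R : realType) (I : R -> Prop) (t t' : R) : Prop :=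
  forall u, t <= u -> u <= t' -> I u.

(* Main.v *)
Require Import Defs.
From mathcomp Require Import all_boot all_order all_algebra.
From mathcomp Require Import reals.
From mathcomp Require Import zify lra.
From Stdlib Require Import Classical ClassicalEpsilon.
Import Order.TTheory GRing.Theory Num.Theory.
Local Open Scope ring_scope.
Set Implicit Arguments. Unset Strict Implicit.

Section S.
Variables (R : realType) (n : nat) (lmin lmax s : R) (E : execution R n).
Hypotheses (Hlmin : 0 < lmin) (Hlt : lmin < lmax) (Hs : 1 < s).

Definition stime (st : pstate R) : R :=
  match st with Down t => t | Idle _ _ t => t | Busy _ _ t => t end.

Definition trace (q : 'I_n) (st : nat -> pstate R) :=
  st 0%N = Idle 0 None 0 /\
  forall k : nat, match ev E q k with
                  | Some e => step lmin lmax s E q (st k) e (st k.+1)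
                  | None => ev E q k.+1 = None /\ final_ok E (st k)
                  end.

Lemma cost_s_ge0 y : 0 <= cost lmin lmax E y / s.
Proof.
have hh1 := Hlmin; have hh2 := Hlt; have hh3 := Hs.
have h1 : 0 <= lmax by lra.
have h2 : 0 <= lmin by lra.
have h3 : 0 <= s by lra.
by rewrite /cost; case: (big E y); apply: divr_ge0.
Qed.

Lemma step_time q st : trace q st -> forall k t kd, ev E q k = Some (t, kd) ->
  stime (st k) <= t /\ stime (st k.+1) = t.
Proof.
move=> [_ Htr] k t kd He; move: (Htr k); rewrite He /=.
clear He; case: (st k) => [t0|c pr t0|c x t0]; case: kd => [|| y| y] //=.
- by move=> [-> h].
- by move=> [-> [h _]].
- by move=> [-> [h _]].
- by move=> [-> [h _]].
- move=> [-> [_ ->]] /=; split=> //; have := cost_s_ge0 x; lra.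
Qed.

Lemma none_prop q st : trace q st -> forall k, ev E q k = None ->
  forall d, ev E q (k + d) = None.
Proof.
move=> [_ Htr] k Hk; elim=> [|d IH]; first by rewrite addn0.
by move: (Htr (k + d)%N); rewrite IH addnS => -[].
Qed.

Lemma mono q st : trace q st -> forall j tj kj, ev E q j = Some (tj, kj) ->
  forall d t kd, ev E q (j + d) = Some (t, kd) -> tj <= t.
Proof.
move=> Htr j tj kj Hj; elim=> [|d IH] t kd.
  by rewrite addn0 Hj => -[-> _].
case He: (ev E q (j + d)) => [[t0 k0]|].
  have := IH _ _ He; have [_ h1] := step_time Htr He.
  rewrite addnS => h2 He'; have [h3 _] := step_time Htr He'.
  rewrite h1 in h3; lra.
by have := none_prop Htr He 1; rewrite addn1 addnS => ->.
Qed.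

Lemma mono' q st : trace q st -> forall j j' tj kj t kd, (j <= j')%N ->
  ev E q j = Some (tj, kj) -> ev E q j' = Some (t, kd) -> tj <= t.
Proof.
move=> Htr j j' tj kj t kd Hjj Hj Hj'.
move: Hj'; rewrite -(subnKC Hjj) => Hj'; exact: (mono Htr Hj Hj').
Qed.

Lemma report_prev q st : trace q st -> forall j t y, ev E q j = Some (t, Report y) ->
  exists j0 t0, j = j0.+1 /\ ev E q j0 = Some (t0, Sched y) /\ t = t0 + cost lmin lmax E y / s.
Proof.
move=> Htr j t y He; have [H0 Ht] := Htr; move: (Ht j); rewrite He /=.
case Hsj: (st j) => [t0|c pr t0|c x t0] //; move=> [_ [-> ->]].
case: j He Hsj => [|j0] He Hsj; first by rewrite H0 in Hsj.
case Hev0: (ev E q j0) => [[t1 k1]|]; last first.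
  by move: (Ht j0); rewrite Hev0 He => -[].
move: (Ht j0); rewrite Hev0 /= Hsj; move: Hev0; clear He.
case: (st j0) => [?|???|???]; case: k1 => [||?|?] //= Hev0; move=> [Heq Hr]; try discriminate Heq.
case: Heq => _ Hx Htt; subst; by exists j0, t1.
Qed.


Lemma sched_chooses q st : trace q st -> forall k t x, ev E q k = Some (t, Sched x) ->
  exists c pr, chooses lmin lmax s E q c pr t x.
Proof.
move=> [_ Ht] k t x He; move: (Ht k); rewrite He /=.
case: (st k) => [?|c pr ?|???] //; move=> [_ [_ [_ H]]]; by exists c, pr.
Qed.

Lemma card_le (P : nat -> Prop) m k : card_is P m -> at_least P k -> (k <= m)%N.
Proof.
move=> [l [Hu [Hs' Hl]]] [l' [Hu' [Hk Hl']]].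
rewrite -Hs'; apply: leq_trans Hk _; apply: uniq_leq_size => // y /Hl' /Hl //.
Qed.

Lemma pick_big q c pr t x : chooses lmin lmax s E q c pr t x -> big E x ->
  at_least (inL E t true) (n ^ 2) ->
  exists m2, (n ^ 2 <= m2)%N /\ at_pos E t true x (((val q).+1 * n) %% m2).
Proof.
move=> [m1 [m2 [Hc1 [Hc2 H]]]] Hx Hal.
have Hm2 := card_le Hc2 Hal.
have Nf : forall k, ~ at_pos E t false x k by move=> k [[_ Hb] _]; rewrite Hx in Hb.
exists m2; split => //.
move: H; cbv zeta; rewrite (ltnNge m2) Hm2 andbF /=.
case: ifP => _ //; case: ifP => _ // h; case: (Nf _ h).
Qed.

Lemma count_bound (A1 A2 : nat -> Prop) a1 a2 (Rel : nat -> 'I_n -> Prop) (p1 : 'I_n) :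
 card_is A1 a1 -> card_is A2 a2 -> (forall y, A2 y -> A1 y) ->
 (forall y, A1 y -> ~ A2 y -> exists q, q != p1 /\ Rel y q) ->
 (forall y y' q, A1 y -> A1 y' -> Rel y q -> Rel y' q -> y = y') ->
 (a2 <= a1 /\ a1 <= a2 + n.-1)%N.
Proof.
move=> [l1 [Hu1 [Hs1 Hl1]]] [l2 [Hu2 [Hs2 Hl2]]] Hsub Hrep Hinj.
rewrite -Hs1 -Hs2; split.
  apply: uniq_leq_size => // y /Hl2 /Hsub /Hl1 //.
rewrite -(count_predC (mem l2) l1) -!size_filter; apply: leq_add.
  apply: uniq_leq_size; first exact: filter_uniq.
  by move=> y; rewrite mem_filter => /andP [].
set l3 := filter _ l1.
pose f y := epsilon (inhabits p1) (fun q => q != p1 /\ Rel y q).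
have Hf : forall y, y \in l3 -> f y != p1 /\ Rel y (f y).
  move=> y; rewrite mem_filter => /andP [Hn2 Hin1].
  have HA1 : A1 y by apply/Hl1.
  have HnA2 : ~ A2 y by move=> /Hl2 h; rewrite /= h in Hn2.
  exact: (epsilon_spec (inhabits p1) _ (Hrep y HA1 HnA2)).
have HA : forall y, y \in l3 -> A1 y by move=> y; rewrite mem_filter => /andP [_ /Hl1].
rewrite -(size_map f); apply: (@leq_trans (size (enum (predC1 p1)))); last first.
  by rewrite -cardE cardC1 card_ord.
apply: uniq_leq_size.
  rewrite map_inj_in_uniq; first exact: filter_uniq.
  move=> y y' Hy Hy' Heq; apply: (Hinj y y' (f y)); [exact: HA|exact: HA|exact: (Hf y Hy).2|].
  by rewrite Heq; exact: (Hf y' Hy').2.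
move=> q /mapP [y Hy ->]; rewrite mem_enum inE; exact: (Hf y Hy).1.
Qed.

Lemma pos_eq (p1 p2 : 'I_n) m1 m2 : (n ^ 2 <= m1)%N -> (n ^ 2 <= m2)%N ->
  (((val p2).+1 * n) %% m2 <= ((val p1).+1 * n) %% m1)%N ->
  (((val p1).+1 * n) %% m1 <= ((val p2).+1 * n) %% m2 + n.-1)%N -> p1 = p2.
Proof.
have mc : forall (p : 'I_n) m, (n ^ 2 <= m)%N ->
   (((nat_of_ord p).+1 * n) %% m = (nat_of_ord p).+1 * n /\ (nat_of_ord p).+1 * n < m)%N \/
   (((nat_of_ord p).+1 * n) %% m = 0 /\ (nat_of_ord p).+1 = n)%N.
  move=> p m Hm; have Hp := ltn_ord p.
  have Ha : ((nat_of_ord p).+1 * n <= n ^ 2)%N by rewrite -mulnn leq_mul2r Hp orbT.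
  have Hle : ((nat_of_ord p).+1 * n <= m)%N by apply: leq_trans Hm.
  case: (ltngtP ((nat_of_ord p).+1 * n) m) => [h||h].
  - by left; rewrite modn_small.
  - by rewrite ltnNge Hle.
  - right; rewrite h modnn; split => //.
    have : ((nat_of_ord p).+1 * n = n * n)%N by apply/eqP; rewrite eqn_leq mulnn Ha h Hm.
    have n0 : (0 < n)%N := leq_ltn_trans (leq0n _) Hp.
    by move/eqP; rewrite eqn_mul2r (gtn_eqF n0) /= => /eqP.
move=> H1 H2; have Hp1 := ltn_ord p1; have Hp2 := ltn_ord p2.
have n0 : (0 < n)%N := leq_ltn_trans (leq0n _) Hp1.
have G1 : (n <= (nat_of_ord p1).+1 * n)%N by rewrite leq_pmull.
have G2 : (n <= (nat_of_ord p2).+1 * n)%N by rewrite leq_pmull.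
case: (mc p1 m1 H1) => [[-> _]|[-> e1]]; case: (mc p2 m2 H2) => [[-> _]|[-> e2]] => A B; apply: val_inj => /=; change (nat_of_ord p1 = nat_of_ord p2).
- have C1 : (nat_of_ord p2 <= nat_of_ord p1)%N by move: A; rewrite leq_pmul2r.
  have C2 : ((nat_of_ord p1).+1 < (nat_of_ord p2).+2)%N.
    rewrite -(ltn_pmul2r n0); apply: leq_ltn_trans B _.
    rewrite [(_.+2 * n)%N]mulSn; move: ((val p2).+1 * n)%N => z; lia.
  lia.
- lia.
- lia.
- lia.
Qed.


Lemma inj_aux q st : trace q st -> forall j j' t t' y y' t1 t2,
  ev E q j = Some (t, Report y) -> ev E q j' = Some (t', Report y') -> (j < j')%N ->
  big E y' -> t1 < t -> t' <= t2 -> t2 < t1 + lmax / s -> False.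
Proof.
move=> Htr j j' t t' y y' t1 t2 He He' Hjj Hb Ht1 Ht2 H21.
have [j0 [t0 [Hj' [He0 Ht']]]] := report_prev Htr He'; subst j'.
have := mono' Htr (j := j) (j' := j0) _ He He0; rewrite -ltnS => /(_ Hjj) h.
move: Ht'; rewrite /cost Hb => Ht'; clear He He' He0; lra.
Qed.

Lemma abs_time (Hv : forall q, exists st, trace q st) p x t t' :
  abs_exec E p x t t' -> t' = t + cost lmin lmax E x / s.
Proof.
move=> [k [Es Er]]; have [st Htr] := Hv p.
have [j0 [t0 [Hj [He0 Ht]]]] := report_prev Htr Er.
case: Hj => Hj; subst j0; rewrite Es in He0; case: He0 => h0; by rewrite Ht h0.
Qed.

Lemma core (Hv : forall q, exists st, trace q st) x (Hx : big E x) (p1 p2 : 'I_n) t1 t1' t2 t2' :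
 abs_exec E p1 x t1 t1' -> abs_exec E p2 x t2 t2' -> t1 <= t2 ->
 at_least (inL E t1 true) (n ^ 2) -> at_least (inL E t2 true) (n ^ 2) ->
 (p1, t1, t1') = (p2, t2, t2').
Proof.
move=> A1 A2 H12 Al1 Al2.
have hh1 := Hlmin; have hh2 := Hlt; have hh3 := Hs.
have cx : cost lmin lmax E x = lmax by rewrite /cost Hx.
have ht1 := abs_time Hv A1; have ht2 := abs_time Hv A2; rewrite cx in ht1 ht2.
move: A1 A2 => [k1 [E1s E1r]] [k2 [E2s E2r]].
have [st1 Htr1] := Hv p1; have [st2 Htr2] := Hv p2.
have hls : 0 < lmax / s by apply: divr_gt0; lra.
have [c2 [pr2 Hc2]] := sched_chooses Htr2 E2s.
have [m2 [Hm2 Hpos2]] := pick_big Hc2 Hx Al2.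
have [c1 [pr1 Hc1]] := sched_chooses Htr1 E1s.
have [m1 [Hm1 Hpos1]] := pick_big Hc1 Hx Al1.
have Hpend1 : pending E t1 x := Hpos1.1.1.
have Hpend2 : pending E t2 x := Hpos2.1.1.
have H21 : t2 < t1'.
  rewrite ltNge; apply/negP => h; case: Hpend2 => _ [_ []]; by exists p1, k1.+1, t1'.
have Hp : p1 = p2.
  case: Hpos1 => _ Hcard1; case: Hpos2 => _ Hcard2.
  pose Rel := fun y q => exists j t', ev E q j = Some (t', Report y) /\ t1 < t' /\ t' <= t2.
  have HS : forall y, (inL E t2 true y /\ prec E y x) -> inL E t1 true y /\ prec E y x.
    move=> y [[[Hi [Ha Hn']] Hb] Hpr]; split => //; split => //; split => //; split.
    - have := Hpend1.2.1; case: Hpr => [h|[h _]]; lra.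
    - move=> [q [j [t' [He Ht']]]]; apply: Hn'; exists q, j, t'; split => //; lra.
  have HR : forall y, (inL E t1 true y /\ prec E y x) -> ~ (inL E t2 true y /\ prec E y x) ->
      exists q, q != p1 /\ Rel y q.
    move=> y [[[Hi [Ha Hn']] Hb] Hpr] HnA2.
    have Hrep : exists q j t', ev E q j = Some (t', Report y) /\ t' <= t2.
      apply: NNPP => Hno; apply: HnA2; split => //; split => //; split => //; split => //; lra.
    case: Hrep => q [j [t' [He Ht']]].
    have Ht1' : t1 < t' by rewrite ltNge; apply/negP => h; apply: Hn'; exists q, j, t'.
    exists q; split; last by exists j, t'.
    apply/eqP => Hq; subst q.
    case: (ltngtP j k1.+1) => Hj.
    - have := mono' Htr1 (j := j) (j' := k1) _ He E1s; rewrite -ltnS => /(_ Hj) h; lra.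
    - have := mono' Htr1 (ltnW Hj) E1r He; lra.
    - rewrite Hj E1r in He; case: He => _ hy; subst y.
      case: Hpr => [h|[_ h]]; [lra| by rewrite ltnn in h].
  have HI : forall y y' q, (inL E t1 true y /\ prec E y x) -> (inL E t1 true y' /\ prec E y' x) ->
      Rel y q -> Rel y' q -> y = y'.
    move=> y y' q [[_ Hb] _] [[_ Hb'] _] [j [t [He [Ha Hb2]]]] [j' [t' [He' [Ha' Hb2']]]].
    have [stq Htq] := Hv q.
    case: (ltngtP j j') => Hjj.
    - by case: (inj_aux Htq He He' Hjj Hb' Ha Hb2'); rewrite -ht1.
    - by case: (inj_aux Htq He' He Hjj Hb Ha' Hb2); rewrite -ht1.
    - subst; rewrite He in He'; by case: He'.
  have [hA hB] := count_bound Hcard1 Hcard2 HS HR HI.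
  exact: (pos_eq Hm1 Hm2 hA hB).
subst p2.
case: (ltngtP k1 k2) => Hk.
- have := mono' Htr1 Hk E1r E2s; move=> hh; exfalso; lra.
- have := mono' Htr1 Hk E2r E1s; move=> hh; exfalso; lra.
- subst k2; rewrite E1s in E2s; case: E2s => <-; rewrite E1r in E2r; by case: E2r => <-.
Qed.

End S.

Theorem lemma11 (R : realType) (n : nat) (lmin lmax s : R) (E : execution R n) :
  (0 < n)%N -> 0 < lmin -> lmin < lmax -> 1 < s ->
  valid lmin lmax s E ->
  forall I : R -> Prop, is_interval I ->
  (forall t, I t -> at_least (inL E t true) (n ^ 2)) ->
  forall (x : nat), big E x ->
  forall (p1 p2 : 'I_n) (t1 t1' t2 t2' : R),
    abs_exec E p1 x t1 t1' -> contained I t1 t1' ->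
    abs_exec E p2 x t2 t2' -> contained I t2 t2' ->
    (p1, t1, t1') = (p2, t2, t2').
Proof.
move=> Hn Hl Hll Hs [_ Hv] I HI Hat x Hx p1 p2 t1 t1' t2 t2' A1 C1 A2 C2.
have Hv' : forall q, exists st, trace lmin lmax s E q st by exact: Hv.
have cg := cost_s_ge0 E Hl Hll Hs x.
have ht1 := abs_time Hv' A1; have ht2 := abs_time Hv' A2.
have I1 : I t1 by apply: C1; lra.
have I2 : I t2 by apply: C2; lra.
case: (lerP t1 t2) => h.
  exact: (core Hl Hll Hs Hv' Hx A1 A2 h (Hat _ I1) (Hat _ I2)).
by rewrite (core Hl Hll Hs Hv' Hx A2 A1 (ltW h) (Hat _ I2) (Hat _ I1)).
Qed.
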